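(* Let $G$ and $H$ be graphs, $k \in \mathbb{N}$, and suppose that $\Phi$ is a level-$k$ quantum isomorphism map from $G$ to $H$. If $M$ is the Choi matrix of $\Phi$, then $M_{s,t} = 0$ for $s,t \in (V(G)\times V(H))^k$ whenever some cyclic permutation of the string $s^R t$ contains consecutive letters $gh$ and $g'h'$ (with $g,g' \in V(G)$, $h,h' \in V(H)$) such that $\mathrm{rel}_G(g,g') \neq \mathrm{rel}_H(h,h')$.
   Context: Graphs are finite, undirected, without multiple edges; $G,H$ are simple. For $g,g'\in V(G)$ and $h,h'\in V(H)$, $\mathrm{rel}_G(g,g')=\mathrm{rel}_H(h,h')$ means both pairs are adjacent, both are non-adjacent distinct, or both are equal. Let $\Sigma = V(G)\times V(H)$; a letter $(g,h)$ is written $gh$. For a string $s=s_1\cdots s_k$, $s^R = s_k\cdots s_1$ is its reversal, and $st$ denotes concatenation. A $(k,k)$-bilabelled graph is $\boldsymbol{F}=(F,\boldsymbol{u},\boldsymbol{v})$ with $\boldsymbol{u},\boldsymbol{v}\in V(F)^k$; its homomorphism tensor $\boldsymbol{F}_G\in\mathbb{C}^{V(G)^k\times V(G)^k}$ has $(\boldsymbol{x},\boldsymbol{y})$-entry equal to the number of homomorphisms $h:F\to G$ with $h(u_i)=x_i$, $h(v_i)=y_i$. Atomic graphs: $\mathcal{Q}_k^P$ is the set of $(k,k)$-bilabelled minors (obtained by edge contraction, edge deletion, deletion of unlabelled vertices) of $\boldsymbol{C}_k=(C_k,(1,\dots,k),(k+1,\dots,2k))$, where $V(C_k)=[2k]$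 and $E(C_k)=\{\{i,i+1\}: i\in[2k], i\neq k,2k\}\cup\{\{1,k+1\},\{k,2k\}\}$; $\mathcal{Q}_k^S$ is the set of bilabelled minors of $\boldsymbol{M}_k=(M_k,(1,\dots,k),(k+1,\dots,2k))$ with $V(M_k)=[2k]$, $E(M_k)=\{\{i,i+k\}:i\in[k]\}$; $\mathcal{Q}_k=\mathcal{Q}_k^P\cup\mathcal{Q}_k^S$. $I$ and $J$ denote the identity and all-ones matrices, $\odot$ the Schur (entrywise) product. For $\sigma$ a permutation of the $2k$ label positions, $X^\sigma$ denotes the matrix obtained by permuting the $2k$ index coordinates accordingly; $\mathscr{C}(1,\dots,k,2k,\dots,k+1)$ is the group of cyclic permutations of the cyclic order $1,\dots,k,2k,\dots,k+1$. A linear map $\Phi:\mathbb{C}^{V(G)^k\times V(G)^k}\to\mathbb{C}^{V(H)^k\times V(H)^k}$ is a level-$k$ quantum isomorphism map from $G$ to $H$ if: $\Phi$ is completely positive; $\Phi(\boldsymbol{F}_G\odot X)=\boldsymbol{F}_H\odot\Phi(X)$ for all $\boldsymbol{F}\in\mathcal{Q}_k^P$ and all $X$; $\Phi(I)=I=\Phi^*(I)$; $\Phi(J)=J=\Phi^*(J)$; $\Phi(\boldsymbol{F}_G)=\boldsymbol{F}_H$ for all $\boldsymbol{F}\in\mathcal{Q}_k$; and $\Phi(X^\sigma)=\Phi(X)^\sigma$ for all $\sigma\in\mathscr{C}(1,\dots,k,2k,\dots,k+1)$. The Choi matrix $M$ of $\Phi$ is indexed by $(V(G)\times V(H))^k$,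 with $M_{g_1h_1\cdots g_kh_k,\,g'_1h'_1\cdots g'_kh'_k}=\Phi(E^{g_1\cdots g_k,\,g'_1\cdots g'_k})_{h_1\cdots h_k,\,h'_1\cdots h'_k}$, where $E^{\boldsymbol{x},\boldsymbol{y}}$ is the matrix unit. *)

(* Defs.v *)
From HB Require Import structures.
From mathcomp Require Import all_boot all_order all_algebra all_field.
Set Implicit Arguments. Unset Strict Implicit. Unset Printing Implicit Defensive.
Import Order.TTheory GRing.Theory Num.Theory.
Local Open Scope ring_scope.

Definition simple_graph (T : finType) (e : rel T) : Prop :=
  (forall x y, e x y = e y x) /\ (forall x, ~~ e x x).

Definition relg (T : finType) (e : rel T) (g g' : T) : nat :=
  if g == g' then 0%N else if e g g' then 1%N else 2%N.

Definition ktup (k : nat) (T : finType) := {ffun 'I_k -> T}.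
Definition kmat (k : nat) (T : finType) := ktup k T -> ktup k T -> algC.

Definition idm k (T : finType) : kmat k T := fun x y => (x == y)%:R.
Definition onem k (T : finType) : kmat k T := fun _ _ => 1.
Arguments idm : clear implicits.
Arguments onem : clear implicits.
Definition munit k (T : finType) (a b : ktup k T) : kmat k T :=
  fun x y => ((x == a) && (y == b))%:R.
Definition schur k (T : finType) (A B : kmat k T) : kmat k T :=
  fun x y => A x y * B x y.

Record blg (k : nat) := BLG {
  bv : finType; be : rel bv; bu : 'I_k -> bv; bw : 'I_k -> bv }.
Arguments bv {k} b : rename.
Arguments be {k} b _ _ : rename.
Arguments bu {k} b _ : rename.
Arguments bw {k} b _ : rename.

Definition homt k (F : blg k) (T : finType) (e : rel T) : kmat k T :=
  fun x y => #|[set h : {ffun bv F -> T} |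
      [forall a, forall b, be F a b ==> e (h a) (h b)]
   && [forall j, h (bu F j) == x j] && [forall j, h (bw F j) == y j]]|%:R.

(* bilabelled minors: closure under edge deletion, deletion of an unlabelled
   vertex and edge contraction (graphs taken up to isomorphism, parallel
   edges merged). *)
Inductive bl_minor k (F0 : blg k) : blg k -> Prop :=
| bm_refl : bl_minor F0 F0
| bm_del_edge (F : blg k) (a b : bv F) : bl_minor F0 F -> be F a b ->
    bl_minor F0 (@BLG k (bv F)
      (fun x y => be F x y && ~~ (((x == a) && (y == b)) || ((x == b) && (y == a))))
      (bu F) (bw F))
| bm_del_vertex (F : blg k) (a : bv F) (T : finType) (i : T -> bv F)
    (u w : 'I_k -> T) : bl_minor F0 F -> injective i ->
    (forall x, x != a <-> exists y, i y = x) ->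
    (forall j, i (u j) = bu F j) -> (forall j, i (w j) = bw F j) ->
    bl_minor F0 (@BLG k T (fun x y => be F (i x) (i y)) u w)
| bm_contract (F : blg k) (a b : bv F) (T : finType) (p : bv F -> T) :
    bl_minor F0 F -> be F a b ->
    (forall z, exists x, p x = z) ->
    (forall x y, p x = p y <-> (x = y \/ (x = a /\ y = b) \/ (x = b /\ y = a))) ->
    bl_minor F0 (@BLG k T
      (fun z1 z2 => (z1 != z2) &&
         [exists x, exists y, (p x == z1) && (p y == z2) && be F x y])
      (fun j => p (bu F j)) (fun j => p (bw F j))).

(* C_k with vertices 0..2k-1 (vertex i+1 of the paper is i here) *)
Definition ck_adj (k a b : nat) : bool :=
  [|| (a.+1 == b) && (a != k.-1), (a == 0%N) && (b == k)
    | (a == k.-1) && (b == (k + k).-1)].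
Definition Ck (k : nat) : blg k :=
  @BLG k 'I_(k + k)
    (fun a b => (ck_adj k a b || ck_adj k b a) && (a != b))
    (fun i => lshift k i) (fun i => rshift k i).
Definition Mk (k : nat) : blg k :=
  @BLG k 'I_(k + k) (fun a b => (a + k == b)%N || (b + k == a)%N)
    (fun i => lshift k i) (fun i => rshift k i).

Definition QP k (F : blg k) : Prop := bl_minor (Ck k) F.
Definition QS k (F : blg k) : Prop := bl_minor (Mk k) F.
Definition Q k (F : blg k) : Prop := QP F \/ QS F.

(* cyclic word x_1 .. x_k y_k .. y_1 ; rotating it by r gives X^sigma *)
Definition cword k (T : finType) (x y : ktup k T) : seq T :=
  [seq x i | i <- enum 'I_k] ++ rev [seq y i | i <- enum 'I_k].
Definition cperm k (T : finType) (r : nat) (X : kmat k T) : kmat k T :=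
  fun x y => let w := rot r (cword x y) in
    X [ffun i : 'I_k => nth (x i) w i] [ffun i : 'I_k => nth (x i) w ((k + k).-1 - i)].

Definition linmap k (TG TH : finType) (Phi : kmat k TG -> kmat k TH) : Prop :=
  forall (c : algC) (X Y : kmat k TG),
    Phi (fun x y => c * X x y + Y x y) = (fun a b => c * Phi X a b + Phi Y a b).

(* adjoint w.r.t. the Hilbert-Schmidt inner product <A,B> = sum conj(A) B *)
Definition adjoint k (TG TH : finType) (Phi : kmat k TG -> kmat k TH)
  : kmat k TH -> kmat k TG :=
  fun B x y => \sum_a \sum_b (Phi (munit x y) a b)^* * B a b.

Definition psd (I : finType) (A : I -> I -> algC) : Prop :=
  (forall i j, A j i = (A i j)^*) /\
  (forall v : I -> algC, 0 <= \sum_i \sum_j (v i)^* * A i j * v j).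

Definition completely_positive k (TG TH : finType)
    (Phi : kmat k TG -> kmat k TH) : Prop :=
  forall (n : nat) (X : 'I_n -> 'I_n -> kmat k TG),
    psd (fun p q : 'I_n * ktup k TG => X p.1 q.1 p.2 q.2) ->
    psd (fun p q : 'I_n * ktup k TH => Phi (X p.1 q.1) p.2 q.2).

Definition level_qiso_map k (TG : finType) (eG : rel TG) (TH : finType) (eH : rel TH)
    (Phi : kmat k TG -> kmat k TH) : Prop :=
  linmap Phi /\
  completely_positive Phi /\
  (forall F : blg k, QP F -> forall X,
      Phi (schur (homt F eG) X) = schur (homt F eH) (Phi X)) /\
  (Phi (idm k TG) = idm k TH /\ adjoint Phi (idm k TH) = idm k TG) /\
  (Phi (onem k TG) = onem k TH /\ adjoint Phi (onem k TH) = onem k TG) /\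
  (forall F : blg k, Q F -> Phi (homt F eG) = homt F eH) /\
  (forall r X, Phi (cperm r X) = cperm r (Phi X)).

Definition choi k (TG TH : finType) (Phi : kmat k TG -> kmat k TH)
    (s t : ktup k (prod TG TH)) : algC :=
  Phi (munit [ffun i => (s i).1] [ffun i => (t i).1])
      [ffun i => (s i).2] [ffun i => (t i).2].

Definition revcat k (L : finType) (s t : ktup k L) : seq L :=
  rev [seq s i | i <- enum 'I_k] ++ [seq t i | i <- enum 'I_k].

(* Main.v *)
Require Import Defs.
From mathcomp Require Import all_boot all_order all_algebra all_field zify.
From Stdlib Require Import FunctionalExtensionality.
Set Implicit Arguments. Unset Strict Implicit. Unset Printing Implicit Defensive.
Import Order.TTheory GRing.Theory Num.Theory.
Local Open Scope ring_scope.

Lemma del_edges k (F0 : blg k) : forall n (F : blg k) (e' : rel (bv F)),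
  #|[set uv : bv F * bv F | be F uv.1 uv.2 && ~~ e' uv.1 uv.2]| = n ->
  bl_minor F0 F -> (forall u v, e' u v -> be F u v) -> (forall u v, e' u v = e' v u) ->
  bl_minor F0 (@BLG k (bv F) e' (bu F) (bw F)).
Proof.
elim/ltn_ind=> n IH F e' Hn HF Hsub Hsym.
case: (set_0Vmem [set uv : bv F * bv F | be F uv.1 uv.2 && ~~ e' uv.1 uv.2]) => [H0|[[a b] Hab]].
  have -> : e' = be F.
    apply: functional_extensionality => u; apply: functional_extensionality => v.
    case E: (e' u v); first by rewrite (Hsub _ _ E).
    apply/esym/negbTE/negP => Hb.
    have : (u, v) \in [set uv : bv F * bv F | be F uv.1 uv.2 && ~~ e' uv.1 uv.2].
      by rewrite inE /= Hb E.
    by rewrite H0 inE.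
  by clear Hsub Hsym Hn H0 IH e'; case: F HF.
move: Hab; rewrite inE /= => /andP [Hbe Hne].
have HF1 := bm_del_edge HF Hbe.
set F1 := BLG _ _ _ in HF1.
apply: (IH _ _ F1 e' erefl HF1) => //.
  rewrite -Hn; apply: proper_card; apply/properP; split.
    apply/subsetP => [[u v]]; rewrite !inE /= => /andP [/andP [-> _] ->]; by [].
  exists (a, b); first by rewrite inE /= Hbe Hne.
  by rewrite inE /= (eqxx a) (eqxx b) /= andbF.
move=> u v Huv /=; rewrite Hsub //=.
apply/negP => /orP [/andP [/eqP Hu /eqP Hv]|/andP [/eqP Hu /eqP Hv]]; subst.
  by rewrite Huv in Hne.
by rewrite Hsym Huv in Hne.
Qed.

Lemma del_edges' k (F0 F : blg k) (e' : rel (bv F)) :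
  bl_minor F0 F -> (forall u v, e' u v -> be F u v) -> (forall u v, e' u v = e' v u) ->
  bl_minor F0 (@BLG k (bv F) e' (bu F) (bw F)).
Proof. exact: (del_edges erefl). Qed.


Definition lab k (T : Type) (x y : 'I_k -> T) (v : 'I_(k+k)) : T :=
  match split v with inl i => x i | inr i => y i end.

Lemma lab_l k (T : Type) (x y : 'I_k -> T) j : lab x y (lshift k j) = x j.
Proof. by rewrite /lab (unsplitK (inl _ j : 'I_k + 'I_k)). Qed.
Lemma lab_r k (T : Type) (x y : 'I_k -> T) j : lab x y (rshift k j) = y j.
Proof. by rewrite /lab (unsplitK (inr _ j : 'I_k + 'I_k)). Qed.

Lemma lab_cases k (v : 'I_(k+k)) : (exists j, v = lshift k j) \/ (exists j, v = rshift k j).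
Proof.
case: (splitP v) => j Hj; [left|right]; exists j; exact: val_inj.
Qed.

Lemma labP k (T : finType) (x y : 'I_k -> T) (f : 'I_(k+k) -> T) :
  ([forall j, f (lshift k j) == x j] && [forall j, f (rshift k j) == y j]) =
  [forall v, f v == lab x y v].
Proof.
apply/andP/forallP.
  case=> /forallP H1 /forallP H2 v.
  case: (lab_cases v) => [][j ->]; [rewrite lab_l; exact: H1|rewrite lab_r; exact: H2].
move=> H; split; apply/forallP => j.
  by have := H (lshift k j); rewrite lab_l.
by have := H (rshift k j); rewrite lab_r.
Qed.

Definition Fe k (p q : 'I_(k+k)) : blg k :=
  @BLG k 'I_(k+k) (fun u v => ((u==p)&&(v==q)) || ((u==q)&&(v==p)))
    (fun i => lshift k i) (fun i => rshift k i).

Lemma homt_Fe k (p q : 'I_(k+k)) (T : finType) (e : rel T) x y :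
  (forall a b, e a b = e b a) ->
  homt (Fe p q) e x y = (e (lab x y p) (lab x y q))%:R.
Proof.
move=> Hsym; rewrite /homt /=.
set h0 : {ffun 'I_(k+k) -> T} := [ffun v => lab x y v].
have Hs : [set h : {ffun 'I_(k+k) -> T} | [forall a, forall b,
     ((a == p) && (b == q) || (a == q) && (b == p)) ==> e (h a) (h b)]
   && [forall j, h (lshift k j) == x j] && [forall j, h (rshift k j) == y j]]
   = if e (lab x y p) (lab x y q) then [set h0] else set0.
  apply/setP => h; rewrite !inE -andbA labP.
  case Hh: [forall v, h v == lab x y v].
    have -> : h = h0 by apply/ffunP => v; rewrite ffunE; exact/eqP/(forallP Hh).
    rewrite andbT.
    case E: (e _ _); rewrite ?inE ?eqxx.
      apply/forallP => a; apply/forallP => b; apply/implyP.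
      by case/orP => /andP [/eqP -> /eqP ->]; rewrite !ffunE // Hsym.
    apply/negbTE/negP => /forallP /(_ p) /forallP /(_ q).
    by rewrite !eqxx /= !ffunE E.
  rewrite andbF; case: (e _ _); rewrite ?inE //.
  apply/esym/negbTE/negP => /eqP Hh0; move/negbT: Hh => /negP; apply.
  by apply/forallP => v; rewrite Hh0 ffunE.
rewrite Hs; case: (e _ _); by rewrite ?cards1 ?cards0.
Qed.


Definition Tq k (q : 'I_(k+k)) := {v : 'I_(k+k) | v != q}.
Definition pc k (p q : 'I_(k+k)) (Hpq : p != q) (v : 'I_(k+k)) : Tq q :=
  insubd (exist (fun v => v != q) p Hpq) v.

Lemma val_pc k (p q : 'I_(k+k)) (Hpq : p != q) v :
  val (pc Hpq v) = if v != q then v else p.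
Proof. by rewrite /pc val_insubd. Qed.

Definition Fc k (p q : 'I_(k+k)) (Hpq : p != q) : blg k :=
  @BLG k (Tq q) (fun _ _ => false) (fun j => pc Hpq (lshift k j)) (fun j => pc Hpq (rshift k j)).

Lemma minor_Fc k (p q : 'I_(k+k)) (Hpq : p != q) :
  be (Ck k) p q -> QP (Fc Hpq).
Proof.
move=> Hbe.
have H := @bm_contract k (Ck k) (Ck k) p q (Tq q) (pc Hpq) (bm_refl _) Hbe.
have H2 := del_edges' (e' := fun _ _ => false) (H _ _) (fun _ _ (h : false) => match h with end)
  (fun _ _ => erefl).
apply: H2.
- move=> z; exists (val z); apply: val_inj; rewrite val_pc.
  by case: z => z /= ->.
- move=> x y; split.
    move/(congr1 val); rewrite !val_pc.
    case: eqP => [->|/eqP Hx]; case: eqP => [->|/eqP Hy] /= E; subst; auto.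
  case=> [->|[[-> ->]|[-> ->]]] //; apply: val_inj; rewrite !val_pc eqxx Hpq //.
Qed.

Lemma homt_Fc k (p q : 'I_(k+k)) (Hpq : p != q) (T : finType) (e : rel T) x y :
  homt (Fc Hpq) e x y = (lab x y p == lab x y q)%:R.
Proof.
set h0 : {ffun Tq q -> T} := [ffun z => lab x y (val z)].
rewrite /homt (_ : [set h : {ffun Tq q -> T} | _] = if lab x y p == lab x y q then [set h0] else set0); last first.
  apply/setP => h; rewrite !inE -andbA.
  set A := (X in X && _).
  have -> : A = true by apply/forallP => a; apply/forallP.
  rewrite /= (labP x y (fun v => h (pc Hpq v))).
  apply/forallP/idP.
    move=> H.
    have Hpcq : pc Hpq p = pc Hpq q by apply: val_inj; rewrite !val_pc eqxx Hpq.
    have Epq : lab x y p == lab x y q.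
      by rewrite -(eqP (H p)) -(eqP (H q)) Hpcq.
    rewrite Epq inE; apply/eqP/ffunP => z; rewrite ffunE.
    have Hz : pc Hpq (val z) = z by apply: val_inj; rewrite val_pc; case: z => z /= ->.
    by rewrite -(eqP (H (val z))) Hz.
  case: ifP => Epq; rewrite inE // => /eqP -> v.
  rewrite ffunE val_pc; case: ifP => [_|/negbFE/eqP ->]; by rewrite ?eqxx ?Epq.
case: (_ == _); by rewrite ?cards1 ?cards0.
Qed.


Lemma key_zero k (TG : finType) (eG : rel TG) (TH : finType) (eH : rel TH)
  (Phi : kmat k TG -> kmat k TH) (F : blg k) x y a b :
  level_qiso_map eG eH Phi -> QP F -> homt F eG x y != homt F eH a b ->
  Phi (munit x y) a b = 0.
Proof.
case=> Hlin [_ [Hschur _]] HF Hne.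
have Z : Phi (fun _ _ => 0) = fun _ _ => 0.
  have := Hlin 1 (fun _ _ => 0) (fun _ _ => 0).
  have -> : (fun _ _ : ktup k TG => 1 * 0 + 0 : algC) = (fun _ _ => 0).
    by apply: functional_extensionality => u; apply: functional_extensionality => v; rewrite mulr0 addr0.
  move=> E; apply: functional_extensionality => u; apply: functional_extensionality => v.
  have := congr1 (fun f => f u v) E => /=; rewrite mul1r.
  set X := Phi _ u v => H.
  by apply/esym/(@addrI _ X); rewrite addr0 -{1}H.
have S : schur (homt F eG) (munit x y) =
   fun u v => homt F eG x y * munit x y u v + (fun _ _ => 0 : algC) u v.
  apply: functional_extensionality => u; apply: functional_extensionality => v.
  rewrite /schur /munit addr0; case: eqP => [->|]; case: eqP => [->|] //= _; by rewrite !mulr0.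
have := Hschur F HF (munit x y); rewrite S Hlin Z => /(congr1 (fun f => f a b)) /=.
rewrite /schur addr0 => /eqP; rewrite -subr_eq0 -mulrBl mulf_eq0 subr_eq0 (negbTE Hne) /=.
by move/eqP.
Qed.

Lemma Ck_sym k (u v : 'I_(k+k)) : be (Ck k) u v = be (Ck k) v u.
Proof. by rewrite /= orbC eq_sym. Qed.

Lemma pair_zero k (TG : finType) (eG : rel TG) (TH : finType) (eH : rel TH)
  (Phi : kmat k TG -> kmat k TH) (p q : 'I_(k+k)) (x y : ktup k TG) (a b : ktup k TH) :
  simple_graph eG -> simple_graph eH ->
  level_qiso_map eG eH Phi -> be (Ck k) p q ->
  relg eG (lab x y p) (lab x y q) <> relg eH (lab a b p) (lab a b q) ->
  Phi (munit x y) a b = 0.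
Proof.
move=> [sG _] [sH _] HPhi Hbe Hrel.
have Hpq : p != q by move: Hbe => /= /andP [].
case E: ((lab x y p == lab x y q) == (lab a b p == lab a b q)); last first.
  have K := key_zero (F := Fc Hpq) (x:=x) (y:=y) (a:=a) (b:=b) HPhi (minor_Fc Hpq Hbe). apply: K.
  by rewrite !homt_Fc eqr_nat; move: E; case: (lab x y p == lab x y q); case: (lab a b p == lab a b q).
apply: (key_zero (F := Fe p q) HPhi).
  apply: (del_edges' (F := Ck k) (bm_refl _)).
    by move=> u v /orP [] /andP [/eqP -> /eqP ->] //; rewrite Ck_sym.
  by move=> u v /=; case: (u == p); case: (u == q); case: (v == p); case: (v == q).
rewrite !homt_Fe // eqr_nat.
move: Hrel E; rewrite /relg.
case: (lab x y p == lab x y q); case: (lab a b p == lab a b q) => //=; case: (eG _ _); case: (eH _ _); try done.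
Qed.


Lemma ck_adjP k a b : ck_adj k a b <->
  ((a.+1 = b /\ a <> k.-1) \/ (a = 0 /\ b = k) \/ (a = k.-1 /\ b = (k+k).-1))%N.
Proof.
rewrite /ck_adj; split.
  case/or3P => [/andP[/eqP ? /eqP ?]|/andP[/eqP ? /eqP ?]|/andP[/eqP ? /eqP ?]]; tauto.
case=> [[<- /eqP H]|[[-> ->]|[-> ->]]]; by rewrite ?eqxx ?H ?orbT.
Qed.

Definition Vn k (m : nat) : nat := if (m < k)%N then (k.-1 - m)%N else m.

Lemma Vn_lt k m : (m < k + k)%N -> (Vn k m < k + k)%N.
Proof. rewrite /Vn; case: ifP => _; lia. Qed.

Lemma edge_nat k m : (m < k + k)%N ->
  let A := Vn k m in let B := Vn k (m.+1 %% (k + k)) in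
  (ck_adj k A B || ck_adj k B A) && (A != B).
Proof.
move=> Hm /=.
have Hk : (0 < k)%N by lia.
have [HB|HB] : (m.+1 < k + k /\ m.+1 %% (k+k) = m.+1)%N \/ (m.+1 = k + k /\ m.+1 %% (k+k) = 0)%N.
    case: (ltnP m.+1 (k+k)) => H; [left; split => //; exact: modn_small|].
    right; have E : m.+1 = (k + k)%N by lia.
    by rewrite E modnn.
  case: HB => H1 ->.
  rewrite /Vn; case: ifP => H2; case: ifP => H3; apply/andP; split;
    try (apply/eqP; lia);
    apply/orP; try (left; apply/ck_adjP; lia); right; apply/ck_adjP; lia.
case: HB => H1 ->.
rewrite /Vn; case: ifP => H2; case: ifP => H3; apply/andP; split;
  try (apply/eqP; lia);
  apply/orP; try (left; apply/ck_adjP; lia); right; apply/ck_adjP; lia.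
Qed.


Lemma lab_nat_l k T (s t : 'I_k -> T) (v : 'I_(k+k)) (i : 'I_k) :
  val v = val i -> lab s t v = s i.
Proof.
move=> H; rewrite /lab; case: splitP => j Hj.
  by congr s; apply: val_inj; rewrite /= -Hj.
have := ltn_ord i; move: H Hj => /= H Hj; lia.
Qed.

Lemma lab_nat_r k T (s t : 'I_k -> T) (v : 'I_(k+k)) (i : 'I_k) :
  val v = (k + i)%N -> lab s t v = t i.
Proof.
move=> H; rewrite /lab; case: splitP => j Hj.
  have := ltn_ord j; move: H Hj => /= H Hj; lia.
by congr t; apply: val_inj; move: Hj; rewrite H => /eqP; rewrite eqn_add2l => /eqP.
Qed.

Lemma nth_w k L (s t : ktup k L) d m (Hm : (m < k+k)%N) :
  nth d (revcat s t) m = lab s t (Ordinal (Vn_lt Hm)).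
Proof.
have Hs : forall (f : 'I_k -> L), size [seq f i | i <- enum 'I_k] = k.
  by move=> f; rewrite size_map size_enum_ord.
rewrite /revcat nth_cat size_rev Hs.
case: ifP => Hmk.
  rewrite nth_rev Hs // (nth_map (Ordinal Hmk)); last by rewrite size_enum_ord; lia.
  symmetry; apply: lab_nat_l.
  have E : \val (nth (Ordinal Hmk) (enum (ordinal k)) (k - m.+1)) = (k - m.+1)%N by apply: nth_enum_ord; lia.
  rewrite E /= /Vn Hmk; clear E Hs; lia.
have Hmk' : (m - k < k)%N by lia.
rewrite (nth_map (Ordinal Hmk')); last by rewrite size_enum_ord.
symmetry; apply: lab_nat_r.
have E : \val (nth (Ordinal Hmk') (enum (ordinal k)) (m - k)) = (m - k)%N by apply: nth_enum_ord.
rewrite E /= /Vn Hmk; clear E Hs; lia.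
Qed.

Lemma nth_rot_mod (T : Type) (d : T) (w : seq T) r i :
  (i < size w)%N -> (r <= size w)%N -> nth d (rot r w) i = nth d w ((i + r) %% size w).
Proof.
move=> Hi Hr; rewrite /rot nth_cat size_drop; case: ifP => H.
  rewrite nth_drop modn_small; [by rewrite addnC | lia].
rewrite nth_take; last lia.
have -> : (i + r = (i - (size w - r)) + size w)%N by lia.
by rewrite modnDr modn_small //; lia.
Qed.

Lemma lab_fst k (A B : finType) (s t : ktup k (prod A B)) v :
  lab [ffun i => (s i).1] [ffun i => (t i).1] v = (lab s t v).1.
Proof. by rewrite /lab; case: split => i; rewrite ffunE. Qed.
Lemma lab_snd k (A B : finType) (s t : ktup k (prod A B)) v :
  lab [ffun i => (s i).2] [ffun i => (t i).2] v = (lab s t v).2.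
Proof. by rewrite /lab; case: split => i; rewrite ffunE. Qed.


Theorem lemma3p4 (TG : finType) (eG : rel TG) (TH : finType) (eH : rel TH)
  (k : nat) (Phi : kmat k TG -> kmat k TH) :
  simple_graph eG -> simple_graph eH ->
  level_qiso_map eG eH Phi ->
  forall s t : ktup k (prod TG TH),
  (exists (r j : nat) (g g' : TG) (h h' : TH),
      [/\ (j.+1 < k + k)%N,
          nth (g, h) (rot r (revcat s t)) j = (g, h),
          nth (g, h) (rot r (revcat s t)) j.+1 = (g', h') &
          relg eG g g' <> relg eH h h']) ->
  choi Phi s t = 0.
Proof.
move=> sG sH HPhi s t [r [j [g [g' [h [h' [Hj H1 H2 Hrel]]]]]]].
set w := revcat s t in H1 H2.
have Hs : forall f : 'I_k -> (TG * TH)%type, size [seq f i | i <- enum 'I_k] = k.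
  by move=> f; rewrite size_map size_enum_ord.
have Hsz : size w = (k + k)%N by rewrite /w /revcat size_cat size_rev !Hs.
have [m [Hm E1 E2]] : exists m, [/\ (m < k + k)%N, nth (g,h) (rot r w) j = nth (g,h) w m &
     nth (g,h) (rot r w) j.+1 = nth (g,h) w (m.+1 %% (k+k))%N].
  case: (leqP r (k + k)) => Hr.
    exists ((j + r) %% (k + k))%N; split.
    - apply: ltn_pmod; lia.
    - rewrite nth_rot_mod ?Hsz //; lia.
    - rewrite nth_rot_mod ?Hsz; try lia.
      congr nth; rewrite -(addn1 ((j + r) %% (k+k))%N) modnDml addn1 addSn //.
  rewrite rot_oversize ?Hsz; last lia.
  by exists j; split => //; [lia|rewrite modn_small].
have Hm' : (m.+1 %% (k + k) < k + k)%N by apply: ltn_pmod; lia.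
set p := Ordinal (Vn_lt Hm).
set q := Ordinal (Vn_lt Hm').
have Hbe : be (Ck k) p q.
  by move: (edge_nat Hm) => /=; rewrite -val_eqE.
rewrite /choi.
apply: (pair_zero (p := p) (q := q) sG sH HPhi Hbe).
rewrite !lab_fst !lab_snd /p /q -(nth_w s t (g,h) Hm) -(nth_w s t (g,h) Hm') -/w -E1 -E2 H1 H2 /=.
exact: Hrel.
Qed.
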